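(* Let $\Sigma$ be an alphabet with $|\Sigma|=3$. For every antimorphic involution $\theta$ on $\Sigma^*$, there exists an infinite word over $\Sigma$ that is pseudo-cube-free with respect to $\theta$.
   Context: A function $\theta:\Sigma^*\to\Sigma^*$ is an antimorphic involution if $\theta(uv)=\theta(v)\theta(u)$ and $\theta(\theta(w))=w$. A pseudo cube with respect to $\theta$ is a nonempty word $u_1u_2u_3$ such that for all $1\le i,j\le 3$, $u_i=u_j$ or $u_i=\theta(u_j)$. A word is pseudo-cube-free with respect to $\theta$ if no factor (contiguous subword) of it is a pseudo cube. *)

(* Defs.v *)
From mathcomp Require Import all_boot.
Set Implicit Arguments. Unset Strict Implicit. Unset Printing Implicit Defensive.

Definition antimorphic_involution (T : Type) (theta : seq T -> seq T) : Prop :=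
  (forall u v : seq T, theta (u ++ v) = theta v ++ theta u) /\
  (forall w : seq T, theta (theta w) = w).

Definition pseudo_cube (T : Type) (theta : seq T -> seq T) (w : seq T) : Prop :=
  w <> [::] /\
  exists u1 u2 u3 : seq T,
    w = u1 ++ u2 ++ u3 /\
    let u := fun i : nat => match i with 0 => u1 | 1 => u2 | _ => u3 end in
    forall i j : nat, i < 3 -> j < 3 -> u i = u j \/ u i = theta (u j).

Definition factor (T : Type) (x : nat -> T) (i n : nat) : seq T :=
  map x (iota i n).

Definition inf_pseudo_cube_free (T : Type) (theta : seq T -> seq T)
  (x : nat -> T) : Prop :=
  forall i n : nat, ~ pseudo_cube theta (factor x i n).

(* Main.v *)
Require Import Defs.
From mathcomp Require Import all_boot zify.
Set Implicit Arguments. Unset Strict Implicit.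

Fixpoint tmf (f n : nat) : bool :=
  match f with 0 => false | S f' => if n is 0 then false else xorb (odd n) (tmf f' n./2) end.
Definition tm n := tmf n n.

Lemma half_lt n : n.+1./2 <= n.
Proof. have := odd_double_half n.+1. rewrite -!muln2. case: (odd n.+1) => /=; lia. Qed.

Lemma tmf_stable f : forall f' n, n <= f -> n <= f' -> tmf f n = tmf f' n.
Proof.
elim: f => [|f IH] [|f'] n //=.
- by rewrite leqn0 => /eqP ->.
- by rewrite leqn0 => _ /eqP ->.
- case: n => // n Hn Hn'. congr xorb. apply: IH.
  + exact: leq_trans (half_lt n) Hn.
  + exact: leq_trans (half_lt n) Hn'.
Qed.

Lemma tm_S n : tm n.+1 = xorb (odd n.+1) (tm n.+1./2).
Proof. rewrite /tm /=. congr xorb. apply: tmf_stable => //. exact: half_lt. Qed.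

Lemma tm_even m : tm (2 * m) = tm m.
Proof.
case: m => [//|m].
rewrite (_ : 2 * m.+1 = (2 * m + 1).+1); last lia.
rewrite tm_S (_ : (2 * m + 1).+1 = (m.+1).*2); last by rewrite -muln2; lia.
by rewrite odd_double doubleK.
Qed.

Lemma tm_odd m : tm (2 * m + 1) = ~~ tm m.
Proof.
rewrite (_ : 2 * m + 1 = (m.*2).+1); last by rewrite -muln2; lia.
by rewrite tm_S /= odd_double /= uphalf_double.
Qed.

Lemma tm_no3 n : tm n = tm n.+1 -> tm n.+1 = tm n.+2 -> False.
Proof.
have := odd_double_half n. rewrite -muln2. set m := n./2. case: (odd n) => /= E; rewrite -E.
- rewrite (_ : (1 + m * 2).+1 = 2 * (m + 1)) ?tm_even; last lia.
  rewrite (_ : (2 * (m + 1)).+1 = 2 * (m + 1) + 1) ?tm_odd; last lia.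
  move=> _. by case: (tm (m + 1)).
- rewrite add0n (_ : m * 2 = 2 * m) ?tm_even; last lia.
  rewrite (_ : (2 * m).+1 = 2 * m + 1) ?tm_odd; last lia.
  move=> H _. by move: H; case: (tm m).
Qed.

Lemma tm_overlap p : 0 < p -> forall i, (forall k, k <= p -> tm (i + k) = tm (i + k + p)) -> False.
Proof.
elim/ltn_ind: p => p IH p0 i H.
have := odd_double_half p. rewrite -muln2. case Hp: (odd p) => /= Ep.
- set h := p./2 in Ep.
  case: (posnP h) => h0.
  + have e0 := H 0 isT. have e1 := H 1 (p0).
    have Hp1 : p = 1 by lia. rewrite Hp1 !addn0 !addn1 in e0 e1.
    exact: (tm_no3 e0 e1).
  + have e0 := H 0 isT. have e1 := H 1 ltac:(lia).
    have e2 := H 2 ltac:(lia). have e3 := H 3 ltac:(lia).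
    have := odd_double_half i. rewrite -muln2. set m := i./2.
    case: (odd i) => /= Ei.
    * move: e0 e1 e2 e3.
      rewrite (_ : i + 0 + p = 2 * (m + h).+1) ?tm_even; last lia.
      rewrite (_ : i + 0 = 2 * m + 1) ?tm_odd; last lia.
      rewrite (_ : i + 1 + p = 2 * (m + h).+1 + 1) ?tm_odd; last lia.
      rewrite (_ : i + 1 = 2 * m.+1) ?tm_even; last lia.
      rewrite (_ : i + 2 + p = 2 * (m + h).+2) ?tm_even; last lia.
      rewrite (_ : i + 2 = 2 * m.+1 + 1) ?tm_odd; last lia.
      rewrite (_ : i + 3 + p = 2 * (m + h).+2 + 1) ?tm_odd; last lia.
      rewrite (_ : i + 3 = 2 * m.+2) ?tm_even; last lia.
      move=> e0 e1 e2 e3.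
      rewrite -e0 negbK in e1. rewrite -e2 negbK in e3.
      exact: (tm_no3 (esym e1) (esym e3)).
    * move: e0 e1 e2 e3.
      rewrite (_ : i + 0 + p = 2 * (m + h) + 1) ?tm_odd; last lia.
      rewrite (_ : i + 0 = 2 * m) ?tm_even; last lia.
      rewrite (_ : i + 1 + p = 2 * (m + h).+1) ?tm_even; last lia.
      rewrite (_ : i + 1 = 2 * m + 1) ?tm_odd; last lia.
      rewrite (_ : i + 2 + p = 2 * (m + h).+1 + 1) ?tm_odd; last lia.
      rewrite (_ : i + 2 = 2 * m.+1) ?tm_even; last lia.
      rewrite (_ : i + 3 + p = 2 * (m + h).+2) ?tm_even; last lia.
      rewrite (_ : i + 3 = 2 * m.+1 + 1) ?tm_odd; last lia.
      move=> e0 e1 e2 e3.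
      rewrite e0 in e1. rewrite e2 in e3.
      rewrite negbK in e1. rewrite negbK in e3. exact: (tm_no3 e1 e3).
- set q := p./2 in Ep.
  have q0 : 0 < q by lia.
  have qp : q < p by lia.
  have := odd_double_half i. rewrite -muln2. set j := i./2.
  case: (odd i) => /= Ei.
  + apply: (IH q qp q0 j) => k Hk.
    have := H (2 * k) ltac:(lia).
    rewrite (_ : i + 2 * k + p = 2 * (j + k + q) + 1) ?tm_odd; last lia.
    rewrite (_ : i + 2 * k = 2 * (j + k) + 1) ?tm_odd; last lia.
    by move/negb_inj.
  + apply: (IH q qp q0 j) => k Hk.
    have := H (2 * k) ltac:(lia).
    rewrite (_ : i + 2 * k + p = 2 * (j + k + q)) ?tm_even; last lia.
    by rewrite (_ : i + 2 * k = 2 * (j + k)) ?tm_even; last lia.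
Qed.


Lemma theta_struct (T : eqType) (theta : seq T -> seq T) :
  antimorphic_involution theta ->
  exists f : T -> T, (forall x, f (f x) = x) /\ forall w, theta w = rev (map f w).
Proof.
case=> hm hi.
have tn : theta [::] = [::].
  have := congr1 size (hm [::] [::]). rewrite cat0s size_cat => E.
  apply: size0nil. lia.
have hc : forall a w, theta (a :: w) = theta w ++ theta [:: a] by move=> a w; exact: (hm [:: a] w).
have g1 : forall a, 0 < size (theta [:: a]).
  move=> a. case E: (theta [:: a]) => //. by have := hi [:: a]; rewrite E tn.
have sge : forall w, size w <= size (theta w).
  elim=> [|a w IH] //. rewrite hc size_cat /=. have := g1 a. lia.
have g2 : forall a, size (theta [:: a]) = 1.
  move=> a. have := sge (theta [:: a]). rewrite hi /=. have := g1 a. lia.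
exists (fun a => head a (theta [:: a])).
have ts : forall a, theta [:: a] = [:: head a (theta [:: a])].
  move=> a. have := g2 a. by case: (theta [:: a]) => [|y [|]].
have tr : forall w, theta w = rev (map (fun a => head a (theta [:: a])) w).
  elim=> [|a w IH] //. by rewrite hc IH ts rev_cons cats1.
split=> // x.
move: (hi [:: x]). rewrite (ts x). set y := head x _. by rewrite (ts y) => [[]].
Qed.

Lemma size_factor (T : Type) (x : nat -> T) i n : size (factor x i n) = n.
Proof. by rewrite /factor size_map size_iota. Qed.

Lemma factor_cat (T : Type) (x : nat -> T) i m n :
  factor x i (m + n) = factor x i m ++ factor x (i + m) n.
Proof. by rewrite /factor iotaD map_cat. Qed.

Lemma nth_factor (T : Type) (x : nat -> T) i n k d : k < n -> nth d (factor x i n) k = x (i + k).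
Proof. move=> hk. by rewrite /factor (nth_map 0) ?size_iota // nth_iota. Qed.

Lemma factor_eq (T : Type) (x : nat -> T) i j m :
  factor x i m = factor x j m -> forall k, k < m -> x (i + k) = x (j + k).
Proof.
move=> E k hk. have := congr1 (fun s => nth (x 0) s k) E. by rewrite /= !nth_factor.
Qed.

Lemma pc_split (T : eqType) (f : T -> T) (theta : seq T -> seq T)
  (htf : forall w, theta w = rev (map f w)) (x : nat -> T) i n :
  pseudo_cube theta (factor x i n) ->
  exists m, 0 < m /\
   (factor x i m = factor x (i + m) m \/ factor x i m = rev (map f (factor x (i + m) m))) /\
   (factor x (i + m) m = factor x (i + m + m) m \/
    factor x (i + m) m = rev (map f (factor x (i + m + m) m))).
Proof.
case=> hne [u1 [u2 [u3 [hw hu]]]].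
have h01 := hu 0 1 isT isT. have h12 := hu 1 2 isT isT.
simpl in h01, h12. rewrite !htf in h01 h12.
have s12 : size u1 = size u2 by case: h01 => ->; rewrite ?size_rev ?size_map.
have s23 : size u2 = size u3 by case: h12 => ->; rewrite ?size_rev ?size_map.
set m := size u1 in s12.
have hn : n = m + m + m.
  have := congr1 size hw. rewrite size_factor !size_cat. lia.
subst n.
have E : factor x i m ++ factor x (i + m) m ++ factor x (i + m + m) m = u1 ++ u2 ++ u3.
  by rewrite -hw -[m + m + m]addnA !factor_cat.
have e1 : factor x i m = u1.
  have := congr1 (take m) E. by rewrite !take_size_cat // size_factor.
have E2 := congr1 (drop m) E. rewrite !drop_size_cat // ?size_factor // in E2.
have e2 : factor x (i + m) m = u2.
  have := congr1 (take m) E2. by rewrite !take_size_cat // size_factor.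
have e3 : factor x (i + m + m) m = u3.
  have := congr1 (drop m) E2. by rewrite !drop_size_cat // size_factor.
exists m. rewrite e1 e2 e3. split=> //.
case: (posnP m) => [m0|//]. by move: hne; rewrite m0.
Qed.

Definition v n : nat := if tm n == tm n.+1 then 1 else if tm n.+1 then 2 else 0.

Lemma v_lt3 n : v n < 3.
Proof. rewrite /v. by case: (_ == _); case: (tm _). Qed.

Lemma v_step x y : v x = v y -> (tm x == tm y) = (tm x.+1 == tm y.+1).
Proof. rewrite /v. by case: (tm x); case: (tm y); case: (tm x.+1); case: (tm y.+1). Qed.

Lemma v_step2 x y : v x = v y -> tm x != tm y -> tm x = tm x.+1.
Proof. rewrite /v. by case: (tm x); case: (tm y); case: (tm x.+1); case: (tm y.+1). Qed.

Lemma v_sqfree p i : 0 < p -> (forall k, k < p -> v (i + k) = v (i + k + p)) -> False.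
Proof.
move=> p0 H.
have C : forall k, k <= p -> (tm (i + k) == tm (i + k + p)) = (tm i == tm (i + p)).
  elim=> [|k IH] hk; first by rewrite addn0.
  rewrite -IH; last lia.
  rewrite (v_step (H k hk)) addnS addSn //.
case E: (tm i == tm (i + p)).
- apply: (tm_overlap p0 (i := i)) => k hk. apply/eqP. by rewrite C // E.
- have D : forall k, k <= p -> tm (i + k) = tm i.
    elim=> [|k IH] hk; first by rewrite addn0.
    rewrite addnS -(v_step2 (H k hk)); first by apply: IH; lia.
    by rewrite C ?E //; lia.
  have := D p (leqnn p). move/eqP. by rewrite eq_sym E.
Qed.

Lemma ac_eq (T : eqType) (f : T -> T) (finv : forall x, f (f x) = x) a c
  (hfa1 : f a != a) (hfa2 : f a != c) (u w : seq T) :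
  all (mem [:: a; c]) u -> all (mem [:: a; c]) w -> u = rev (map f w) -> u = w.
Proof.
move=> hu hw E.
have wc : all (pred1 c) w.
  apply/allP => y yw. have := allP hw y yw. rewrite !inE => /orP [/eqP ya|//].
  have : f a \in u by rewrite E mem_rev; apply/mapP; exists y => //; rewrite ya.
  move/(allP hu). by rewrite !inE (negbTE hfa1) (negbTE hfa2).
move/all_pred1P: wc => wE. rewrite wE map_nseq rev_nseq in E.
move: wE E. case: (size w) => [|n] wE E; first by rewrite wE E.
have : f c \in u by rewrite E mem_nseq eqxx.
move/(allP hu). rewrite !inE => /orP [/eqP fca|/eqP fc].
  by move: hfa2; rewrite -fca finv eqxx.
by rewrite E wE fc.
Qed.

Theorem mainTheorem11 (Sigma : finType) (hcard : #|Sigma| = 3)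
  (theta : seq Sigma -> seq Sigma) (htheta : antimorphic_involution theta) :
  exists x : nat -> Sigma, inf_pseudo_cube_free theta x.
Proof.
have [f [finv htf]] := theta_struct htheta.
case: (pickP [pred a | f a != a]) => [a Ha | Hid].
- case: (pickP [pred c | (c != a) && (c != f a)]) => [c /andP [ca cfa] | Hnone].
  + pose z n := if tm n then a else c.
    have zinj : forall p q, z p = z q -> tm p = tm q.
      move=> p q. rewrite /z. case: (tm p); case: (tm q) => // E.
      * by move: ca; rewrite E eqxx.
      * by move: ca; rewrite E eqxx.
    have zall : forall i m, all (mem [:: a; c]) (factor z i m).
      move=> i m. apply/allP => y /mapP [k _ ->]. rewrite /z.
      by case: (tm k); rewrite !inE eqxx ?orbT.
    have hfa2 : f a != c by rewrite eq_sym.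
    exists z. move=> i n /(pc_split htf) [m [m0 [h1 h2]]].
    have e1 : factor z i m = factor z (i + m) m.
      case: h1 => // h1. exact: (ac_eq finv Ha hfa2 (zall _ _) (zall _ _) h1).
    have e2 : factor z (i + m) m = factor z (i + m + m) m.
      case: h2 => // h2. exact: (ac_eq finv Ha hfa2 (zall _ _) (zall _ _) h2).
    apply: (tm_overlap m0 (i := i)) => k hk.
    case: (ltnP k m) => hkm.
    * apply: zinj. rewrite (factor_eq e1 hkm). by rewrite addnAC.
    * have -> : k = m by lia.
      apply: zinj. have := factor_eq e2 m0. by rewrite !addn0.
  + exfalso. have : #|Sigma| <= 2.
      rewrite -cardsT.
      apply: leq_trans (subset_leq_card (_ : [set: Sigma] \subset [set a; f a])) _.
        apply/subsetP => y _. rewrite !inE. have := Hnone y. rewrite /=.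
        by move/negbT; rewrite negb_and !negbK.
      by rewrite cards2; case: (a != f a).
    by rewrite hcard.
- have fid : forall w : seq Sigma, map f w = w.
    move=> w. rewrite -[RHS]map_id. apply: eq_map => y. have := Hid y. rewrite /=.
    by move/negbT; rewrite negbK => /eqP.
  have hs : size (enum Sigma) = 3 by rewrite -cardT.
  have e0 : Sigma by move: hs; case: (enum Sigma) => [|e _] //; exact: e.
  pose z n := nth e0 (enum Sigma) (v n).
  have zinj : forall p q, z p = z q -> v p = v q.
    move=> p q E. apply/eqP. rewrite -(@nth_uniq _ e0 (enum Sigma)) ?hs ?v_lt3 ?enum_uniq //.
    by apply/eqP.
  exists z. move=> i n /(pc_split htf) [m [m0 [h1 _]]].
  case: h1 => h1.
  + apply: (v_sqfree m0 (i := i)) => k hk. apply: zinj.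
    rewrite (factor_eq h1 hk). by rewrite addnAC.
  + rewrite fid in h1.
    have := congr1 (fun s => nth e0 s m.-1) h1. rewrite /= nth_rev ?size_factor; last lia.
    rewrite !nth_factor; try lia. rewrite (_ : m - m.-1.+1 = 0); last lia.
    move=> E. apply: (v_sqfree (p := 1) isT (i := i + m.-1)) => k hk.
    have -> : k = 0 by lia.
    apply: zinj. rewrite !addn0 E. congr z. lia.
Qed.
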